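(* Let $n\geq 2$. Let $\mu$ denote Shannon entropy on classical states, $\mu(x)=-\sum_{i}x_i\log x_i$, and let $\sigma$ denote von Neumann entropy on quantum states, $\sigma(\rho)=-\mathrm{tr}(\rho\log\rho)$. Then: (i) There is an order embedding $\phi:(\Delta^n,\sqsubseteq)\rightarrow(\Omega^n,\sqsubseteq)$ with $\sigma\circ\phi=\mu$. (ii) For any $m\geq 2$, there is no order embedding $\phi:(\Omega^n,\sqsubseteq)\rightarrow(\Delta^m,\sqsubseteq)$ with $\mu\circ\phi=\sigma$ (here $\mu$ is Shannon entropy on $\Delta^m$).
   Context: Classical states: for $k\geq 2$, $\Delta^k=\{x\in[0,1]^k:\sum_{i=1}^k x_i=1\}$; $e_i$ denotes the pure state with $x_i=1$. The Bayesian order $\sqsubseteq$ on $\Delta^k$ is defined recursively. For $x,y\in\Delta^2$: $x\sqsubseteq y$ iff $(y_1\leq x_1\leq 1/2)$ or $(1/2\leq x_1\leq y_1)$. For $k\geq 2$ and $x,y\in\Delta^{k+1}$: $x\sqsubseteq y$ iff for every $i\in\{1,\ldots,k+1\}$ with $x,y\in\mathrm{dom}(p_i)$ one has $p_i(x)\sqsubseteq p_i(y)$ in $\Delta^k$, where the Bayesian projection $p_i:\Delta^{k+1}\rightharpoonup\Delta^k$ has domain $\Delta^{k+1}\setminus\{e_i\}$ and is given by $p_i(x)=\frac{1}{1-x_i}(x_1,\ldots,x_{i-1},x_{i+1},\ldots,x_{k+1})$. Quantum states: $\Omega^n$ is the set of density operators on an $n$-dimensional complex Hilbert space $\mathcal{H}^n$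 (self-adjoint, positive linear operators of trace $1$). An observable is a self-adjoint operator $e$ on $\mathcal{H}^n$; throughout, observables are assumed to have $\mathrm{spec}(e)=\{1,\ldots,n\}$. For such $e$ and $\rho\in\Omega^n$, $\mathrm{spec}(\rho|e):=(\mathrm{tr}(p_e^1\rho),\ldots,\mathrm{tr}(p_e^n\rho))\in\Delta^n$, where $p_e^\lambda$ is the orthogonal projection onto the eigenspace of $e$ for eigenvalue $\lambda$. The spectral order on $\Omega^n$: $\rho\sqsubseteq\tau$ iff there is an observable $e$ with $[\rho,e]=[\tau,e]=0$ (where $[a,b]=ab-ba$) and $\mathrm{spec}(\rho|e)\sqsubseteq\mathrm{spec}(\tau|e)$ in the Bayesian order on $\Delta^n$. An order embedding $\phi:P\to Q$ between posets is a map with $x\sqsubseteq y\iff \phi(x)\sqsubseteq\phi(y)$ for all $x,y\in P$. Convention $0\log 0=0$. *)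

(* Defs.v *)
From HB Require Import structures.
From mathcomp Require Import all_boot all_order all_algebra.
From mathcomp Require Import reals exp complex.
Set Implicit Arguments. Unset Strict Implicit. Unset Printing Implicit Defensive.
Import Order.TTheory GRing.Theory Num.Theory.
Local Open Scope ring_scope.

Section Defs.
Variable R : realType.
Local Notation C := (complex R).

Definition in_Delta (k : nat) (x : 'I_k -> R) : Prop :=
  (forall i, 0 <= x i <= 1) /\ \sum_(i < k) x i = 1.

Definition pure (k : nat) (i : 'I_k) : 'I_k -> R :=
  fun j => if j == i then 1 else 0.

Definition bproj (k : nat) (i : 'I_k.+1) (x : 'I_k.+1 -> R) : 'I_k -> R :=
  fun j => x (lift i j) / (1 - x i).

Fixpoint bayes (m : nat) : ('I_m.+2 -> R) -> ('I_m.+2 -> R) -> Prop :=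
  match m with
  | 0 => fun x y =>
      (y ord0 <= x ord0 /\ x ord0 <= 1 / 2) \/ (1 / 2 <= x ord0 /\ x ord0 <= y ord0)
  | m'.+1 => fun x y =>
      forall i : 'I_m'.+3, x <> pure i -> y <> pure i ->
        @bayes m' (bproj i x) (bproj i y)
  end.

Definition bayes_le (n : nat) : ('I_n -> R) -> ('I_n -> R) -> Prop :=
  match n return ('I_n -> R) -> ('I_n -> R) -> Prop with
  | m.+2 => @bayes m
  | _ => fun _ _ => False
  end.

(* Shannon entropy, with 0 log 0 = 0 *)
Definition xlogx (t : R) : R := if t == 0 then 0 else t * ln t.
Definition shannon (k : nat) (x : 'I_k -> R) : R := - \sum_(i < k) xlogx (x i).

Definition ctr (p q : nat) (A : 'M[C]_(p, q)) : 'M[C]_(q, p) :=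
  (map_mx (fun z : C => z^*) A)^T.

Definition self_adjoint (n : nat) (A : 'M[C]_n) : Prop := ctr A = A.

Definition density (n : nat) (rho : 'M[C]_n) : Prop :=
  [/\ self_adjoint rho,
      (forall v : 'cV[C]_n, 0 <= (ctr v *m rho *m v) 0 0)
    & \tr rho = 1].

Definition observable (n : nat) (e : 'M[C]_n) : Prop :=
  self_adjoint e /\
  (forall a : C, eigenvalue e a <-> exists k : 'I_n, a = (k.+1)%:R).

Definition eig_proj (n : nat) (e : 'M[C]_n) (a : C) (P : 'M[C]_n) : Prop :=
  [/\ P *m P = P, self_adjoint P &
      forall v : 'cV[C]_n, e *m v = a *: v <-> P *m v = v].

(* x = spec(rho | e) : x_k = tr(p_e^{k+1} rho) *)
Definition spec_rel (n : nat) (rho e : 'M[C]_n) (x : 'I_n -> R) : Prop :=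
  forall k : 'I_n, exists P, eig_proj e (k.+1)%:R P /\
    Complex (x k) 0 = \tr (P *m rho).

Definition spectral_le (n : nat) (rho tau : 'M[C]_n) : Prop :=
  exists e : 'M[C]_n, observable e /\ rho *m e = e *m rho /\ tau *m e = e *m tau /\
    exists x y : 'I_n -> R,
      spec_rel rho e x /\ spec_rel tau e y /\ bayes_le x y.

Definition unitary (n : nat) (U : 'M[C]_n) : Prop := ctr U *m U = 1%:M.

Definition cdiag (n : nat) (d : 'I_n -> R) : 'M[C]_n :=
  diag_mx (\row_i Complex (d i) 0).

(* von Neumann entropy: s = -tr(rho log rho), where rho log rho is defined by
   functional calculus from a spectral decomposition rho = U diag(d) U^*. *)
Definition vN_entropy (n : nat) (rho : 'M[C]_n) (s : R) : Prop :=
  exists (U : 'M[C]_n) (d : 'I_n -> R),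
    unitary U /\ rho = U *m cdiag d *m ctr U /\
    Complex s 0 = - \tr (U *m cdiag (fun i => xlogx (d i)) *m ctr U).

End Defs.

(* Main.v *)
Require Import Defs.
From HB Require Import structures.
From mathcomp Require Import all_boot all_order all_algebra all_fingroup.
From mathcomp Require Import reals exp complex.
From mathcomp Require Import ring lra zify.
From Stdlib Require Import FunctionalExtensionality.
Import Order.TTheory GRing.Theory Num.Theory.
Local Open Scope ring_scope.

Lemma bayes_refl (R : realType) m (x : 'I_m.+2 -> R) : bayes x x.
Proof.
elim: m x => [|m IH] x /=.
  by case: (lerP (x ord0) (1/2)) => h; [left|right]; split => //; apply: ltW.
by move=> i _ _; apply: IH.
Qed.

Lemma bproj_pure {R : realType} {m} {i k : 'I_m.+1} {k'} :
  lift i k' = k -> bproj i (pure R k) = pure R k'.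
Proof.
move=> hk; apply: functional_extensionality => j.
rewrite /bproj /pure -hk (inj_eq lift_inj).
have -> : (i == lift i k') = false by apply/negbTE; apply: neq_lift.
by rewrite subr0 divr1.
Qed.

Lemma bayes_pure (R : realType) m (k l : 'I_m.+2) :
  bayes (pure R k) (pure R l) -> k = l.
Proof.
elim: m k l => [|m IH] k l /=.
  rewrite /pure.
  case: k => [[|[|k]] hk] //; case: l => [[|[|l]] hl] //=; try (by move=> _; apply: val_inj).
  - move=> [] [] h1 h2; exfalso; lra.
  - move=> [] [] h1 h2; exfalso; lra.
move=> H; apply/eqP; apply: contraT => hkl.
have [i /andP[hik hil]] : exists i : 'I_m.+3, (val i != val k) && (val i != val l).
  case: (boolP ((0 != val k) && (0 != val l))) => h0; first by exists ord0.
  case: (boolP ((1 != val k) && (1 != val l))) => h1.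
    by exists (@Ordinal m.+3 1 isT).
  exists (@Ordinal m.+3 2 isT) => /=.
  move: hkl h0 h1; rewrite -(inj_eq val_inj) /=; lia.
have hik' : i != k by rewrite -(inj_eq val_inj).
have hil' : i != l by rewrite -(inj_eq val_inj).
case: (unlift_some hik') => k' hk _.
case: (unlift_some hil') => l' hl _.
have := H i.
rewrite (bproj_pure (esym hk)) (bproj_pure (esym hl)).
have np : forall a : 'I_m.+3, a != i -> pure R a <> pure R i.
  move=> a hai e; have := congr1 (fun f => f i) e; rewrite /pure eqxx.
  rewrite eq_sym (negbTE hai) => /eqP; rewrite eq_sym oner_eq0 //.
move=> /(_ (np _ _) (np _ _)).
rewrite eq_sym in hik'; rewrite eq_sym in hil'.
move=> /(_ hik' hil') /IH e; move: hkl; by rewrite hk hl e eqxx.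
Qed.

Lemma Delta_perm (R : realType) k (s : {perm 'I_k}) (x : 'I_k -> R) :
  in_Delta x -> in_Delta (x \o s).
Proof.
move=> [h1 h2]; split => [i|]; first exact: h1.
by rewrite -h2 [RHS](reindex_inj (@perm_inj _ s)).
Qed.

Lemma Delta_bproj {R : realType} {m} {j : 'I_m.+1} {x : 'I_m.+1 -> R} :
  in_Delta x -> x <> pure R j -> x j < 1 /\ in_Delta (bproj j x).
Proof.
move=> [h1 h2] hp.
have hs : \sum_(i < m.+1) x i = x j + \sum_(l < m) x (lift j l).
  by rewrite (bigD1_ord j) //.
have hpos : forall l, 0 <= x (lift j l) by move=> l; case/andP: (h1 (lift j l)).
have hxj : x j < 1.
  case/andP: (h1 j) => _; rewrite le_eqVlt => /orP[/eqP e|//].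
  exfalso; apply: hp; apply: functional_extensionality => i.
  have h0 : \sum_(l < m) x (lift j l) = 0 by move: h2; rewrite hs e; lra.
  rewrite /pure; case: (eqVneq i j) => [->//|hij].
  rewrite eq_sym in hij; case: (unlift_some hij) => l -> _.
  by move/psumr_eq0P: h0 => /(_ (fun l _ => hpos l)) ->.
split => //; split.
  move=> l; rewrite /bproj; apply/andP; split.
    by apply: divr_ge0 => //; rewrite subr_ge0; apply: ltW.
  rewrite ler_pdivrMr ?subr_gt0 // mul1r.
  have : x (lift j l) <= \sum_(l < m) x (lift j l).
    by rewrite (bigD1 l) //= lerDl sumr_ge0.
  move: h2; rewrite hs; lra.
rewrite /bproj -mulr_suml.
have -> : \sum_(l < m) x (lift j l) = 1 - x j by move: h2; rewrite hs; lra.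
by rewrite divff // subr_eq0 eq_sym lt_eqF.
Qed.

Lemma pure_comp (R : realType) k (s : {perm 'I_k}) (i : 'I_k) :
  pure R (s i) \o s = pure R i.
Proof.
by apply: functional_extensionality => l; rewrite /pure /= (inj_eq perm_inj).
Qed.

Lemma bayes_perm (R : realType) m (s : {perm 'I_m.+2}) (x y : 'I_m.+2 -> R) :
  in_Delta x -> in_Delta y -> bayes x y -> bayes (x \o s) (y \o s).
Proof.
elim: m s x y => [|m IH] s x y hx hy /=.
  have e2 : forall z : 'I_2 -> R, in_Delta z -> z ord_max = 1 - z ord0.
    move=> z [_ hz]; move: hz; rewrite !big_ord_recl big_ord0 addr0.
    have -> : lift ord0 ord0 = ord_max :> 'I_2 by apply: val_inj.
    lra.
  have : (s ord0 == ord0) || (s ord0 == ord_max).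
    by case: (s ord0) => [[|[|?]] ?].
  case/orP => /eqP /= ->; first by [].
  rewrite (e2 _ hx) (e2 _ hy); lra.
move=> H i hxi hyi.
set j := s i.
have hxj : x <> pure R j by move=> e; apply: hxi; rewrite e pure_comp.
have hyj : y <> pure R j by move=> e; apply: hyi; rewrite e pure_comp.
have [hx1 hbx] := Delta_bproj hx hxj.
have [hy1 hby] := Delta_bproj hy hyj.
have hne : forall l, s (lift i l) != j.
  by move=> l; rewrite /j (inj_eq perm_inj) eq_sym neq_lift.
pose t (l : 'I_m.+2) : 'I_m.+2 := odflt l (unlift j (s (lift i l))).
have ht : forall l, lift j (t l) = s (lift i l).
  move=> l; rewrite /t; case: unliftP => [k ->//|e].
  by move: (hne l); rewrite e eqxx.
have tinj : injective t.
  by move=> l1 l2 e; move: (ht l1); rewrite e ht => /perm_inj /lift_inj.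
have := IH (perm tinj) _ _ hbx hby (H j hxj hyj).
have -> : bproj i (x \o s) = bproj j x \o perm tinj.
  by apply: functional_extensionality => l; rewrite /bproj /= permE ht.
have -> : bproj i (y \o s) = bproj j y \o perm tinj.
  by apply: functional_extensionality => l; rewrite /bproj /= permE ht.
by [].
Qed.

Lemma ctrE {R : realType} p q (A : 'M[complex R]_(p, q)) i j :
  ctr A i j = (A j i)^*.
Proof. by rewrite /ctr !mxE. Qed.

Lemma ctrK {R : realType} p q (A : 'M[complex R]_(p, q)) : ctr (ctr A) = A.
Proof. by apply/matrixP => i j; rewrite !ctrE conjCK. Qed.

Lemma ctrM {R : realType} p q r (A : 'M[complex R]_(p, q)) (B : 'M[complex R]_(q, r)) :
  ctr (A *m B) = ctr B *m ctr A.
Proof.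
apply/matrixP => i j; rewrite ctrE !mxE rmorph_sum; apply: eq_bigr => k _.
by rewrite rmorphM !ctrE mulrC.
Qed.

Lemma ctrZ {R : realType} p q a (A : 'M[complex R]_(p, q)) :
  ctr (a *: A) = a^* *: ctr A.
Proof. by apply/matrixP => i j; rewrite !(ctrE, mxE) rmorphM. Qed.

Lemma ctr1 {R : realType} n : ctr (1%:M : 'M[complex R]_n) = 1%:M.
Proof. by apply/matrixP => i j; rewrite !(ctrE, mxE) conjC_nat eq_sym. Qed.

Lemma conj_realc {R : realType} (a : R) : (Complex a 0)^* = Complex a 0.
Proof. by apply/eqP; rewrite -CrealE complex_real. Qed.

Lemma obs_vec {R : realType} n (e : 'M[complex R]_n) (k : 'I_n) :
  observable e -> exists u : 'cV_n, e *m u = (k.+1)%:R *: u /\ ctr u *m u = 1%:M.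
Proof.
case=> sa he.
have /eigenvalueP [r hr rn0] : eigenvalue e (k.+1)%:R by apply/he; exists k.
set v := ctr r.
have ev : e *m v = (k.+1)%:R *: v.
  by rewrite /v -{1}sa -ctrM hr ctrZ conjC_nat.
set z := (ctr v *m v) 0 0.
have z_def : z = \sum_i r 0 i * (r 0 i)^*.
  by rewrite /z /v ctrK mxE; apply: eq_bigr => i _; rewrite ctrE.
have zpos : 0 < z.
  rewrite z_def lt0r sumr_ge0 ?andbT; last by move=> i _; apply: mul_conjC_ge0.
  apply: contra rn0 => /eqP h0.
  have h := psumr_eq0P (fun i _ => mul_conjC_ge0 (r 0 i)) h0.
  apply/eqP/matrixP => i j; rewrite ord1 mxE; apply/eqP; rewrite -mul_conjC_eq0 h //.
set c := (sqrtC z)^-1.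
exists (c *: v); split.
  by rewrite -scalemxAr ev !scalerA mulrC.
rewrite ctrZ -scalemxAl -scalemxAr scalerA.
have -> : c^* = c by apply: geC0_conj; rewrite invr_ge0 sqrtC_ge0 ltW.
apply/matrixP => i j; rewrite !ord1 !mxE -/z eqxx.
rewrite -expr2 exprVn sqrtCK.
have -> : \sum_j0 ctr v 0 j0 * v j0 0 = z by rewrite /z mxE.
by rewrite mulVf // gt_eqF.
Qed.

Definition Dn (R : realType) n : 'M[complex R]_n := diag_mx (\row_(k < n) (k.+1)%:R).

Lemma obs_decomp {R : realType} n (e : 'M[complex R]_n) :
  observable e -> exists U : 'M[complex R]_n,
    [/\ ctr U *m U = 1%:M, U *m ctr U = 1%:M & e *m U = U *m Dn R n].
Proof.
move=> ho.
have [u hu] := fin_all_exists (fun k => @obs_vec R n e k ho).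
have sa := ho.1.
have orth : forall j k, j != k -> ctr (u j) *m u k = 0.
  move=> j k hjk.
  have h1 : ctr (u j) *m (e *m u k) = (k.+1)%:R *: (ctr (u j) *m u k).
    by rewrite (hu k).1 scalemxAr.
  have h2 : ctr (u j) *m e = (j.+1)%:R *: ctr (u j).
    by rewrite -{1}sa -ctrM (hu j).1 ctrZ conjC_nat.
  rewrite mulmxA h2 -scalemxAl in h1.
  move/eqP: h1; rewrite -subr_eq0 -scalerBl scaler_eq0 subr_eq0 eqr_nat eqSS.
  by move: hjk; rewrite -(inj_eq val_inj) /= => /negbTE -> /= => /eqP.
pose U := \matrix_(i, k) u k i 0.
have hUU : ctr U *m U = 1%:M.
  apply/matrixP => j k.
  have -> : (ctr U *m U) j k = (ctr (u j) *m u k) 0 0.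
    by rewrite !mxE; apply: eq_bigr => i _; rewrite !ctrE !mxE.
  case: (eqVneq j k) => [->|hjk].
    by rewrite (hu k).2 !mxE !eqxx.
  by rewrite (orth j k hjk) !mxE (negbTE hjk).
exists U; split => //; first exact: mulmx1C.
apply/matrixP => i k; rewrite /Dn mul_mx_diag !mxE.
have := congr1 (fun M : 'M[complex R]_(n,1) => M i 0) (hu k).1; rewrite !mxE mulrC => <-.
by apply: eq_bigr => l _; rewrite mxE.
Qed.

Lemma ctrU_e {R : realType} {n} {e U : 'M[complex R]_n} :
  ctr U *m U = 1%:M -> U *m ctr U = 1%:M -> e *m U = U *m Dn R n ->
  ctr U *m e = Dn R n *m ctr U.
Proof.
move=> h1 h2 h3.
by rewrite -[LHS]mulmx1 -h2 mulmxA -(mulmxA _ e) h3 mulmxA h1 mul1mx.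
Qed.

Lemma Dn_neq {R : realType} {n} {i j : 'I_n} : i != j ->
  ((i.+1)%:R : complex R) != (j.+1)%:R.
Proof.
by move=> h; rewrite eqr_nat eqSS; move: h; rewrite -(inj_eq val_inj).
Qed.

Lemma comm_diag {R : realType} {n} {e U A : 'M[complex R]_n} :
  ctr U *m U = 1%:M -> U *m ctr U = 1%:M -> e *m U = U *m Dn R n ->
  A *m e = e *m A ->
  forall i j, i != j -> (ctr U *m A *m U) i j = 0.
Proof.
move=> h1 h2 h3 hA i j hij.
have hc := ctrU_e h1 h2 h3.
set N := ctr U *m A *m U.
have hN : N *m Dn R n = Dn R n *m N.
  by rewrite /N -mulmxA -h3 mulmxA -(mulmxA _ A) hA mulmxA hc -!mulmxA.
have := congr1 (fun M : 'M[complex R]_n => M i j) hN.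
rewrite /Dn mul_mx_diag mul_diag_mx !mxE => /eqP.
rewrite mulrC -subr_eq0 -mulrBl mulf_eq0 subr_eq0 => /orP[|/eqP //].
by move=> /eqP e'; have := @Dn_neq R n j i; rewrite eq_sym e' eqxx => /(_ hij).
Qed.

Lemma Dn_col {R : realType} {n} (z : 'cV[complex R]_n) (k : 'I_n) :
  Dn R n *m z = (k.+1)%:R *: z -> forall i, i != k -> z i 0 = 0.
Proof.
move=> h i hik.
have := congr1 (fun M : 'M[complex R]_(n,1) => M i 0) h.
rewrite /Dn mul_diag_mx !mxE => /eqP.
rewrite -subr_eq0 -mulrBl mulf_eq0 subr_eq0 (negbTE (Dn_neq hik)) /=.
by move/eqP.
Qed.

Lemma eigproj_form {R : realType} {n} {e U : 'M[complex R]_n} (k : 'I_n) P :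
  ctr U *m U = 1%:M -> U *m ctr U = 1%:M -> e *m U = U *m Dn R n ->
  eig_proj e (k.+1)%:R P -> ctr U *m P *m U = delta_mx k k.
Proof.
move=> h1 h2 h3 [hPP hPsa hPv].
set Q := ctr U *m P *m U.
have hQQ : Q *m Q = Q.
  by rewrite /Q !mulmxA -(mulmxA (ctr U *m P) U (ctr U)) h2 mulmx1 -(mulmxA (ctr U) P P) hPP.
have hQsa : ctr Q = Q by rewrite /Q !ctrM ctrK hPsa mulmxA.
have fwd : forall z : 'cV_n, Q *m z = z -> Dn R n *m z = (k.+1)%:R *: z.
  move=> z hz.
  have hPU : P *m (U *m z) = U *m z.
    by rewrite -{2}hz /Q !mulmxA h2 mul1mx.
  have := (hPv (U *m z)).2 hPU.
  rewrite mulmxA h3 -mulmxA scalemxAr => /(congr1 (mulmx (ctr U))).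
  by rewrite !mulmxA h1 !mul1mx.
have hQc : forall j i, i != k -> Q i j = 0.
  move=> j i hik.
  have hc : Q *m col j Q = col j Q by rewrite colE mulmxA hQQ.
  by have := @Dn_col R n (col j Q) k (fwd _ hc) i hik; rewrite mxE.
have hQk : Q k k = 1.
  pose d : 'cV[complex R]_n := delta_mx k 0.
  have hd : Dn R n *m d = (k.+1)%:R *: d.
    apply/matrixP => i j; rewrite /Dn mul_diag_mx !mxE.
    by case: (eqVneq i k) => [->|h] //=; rewrite !mulr0.
  have hPd : P *m (U *m d) = U *m d.
    by apply/(hPv _).1; rewrite mulmxA h3 -mulmxA hd scalemxAr.
  have : Q *m d = d by rewrite /Q -!mulmxA hPd mulmxA h1 mul1mx.
  move/(congr1 (fun M : 'M_(n,1) => M k 0)).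
  by rewrite /d -colE !mxE !eqxx.
apply/matrixP => i j; rewrite [RHS]mxE.
case: (eqVneq i k) => [->|hik]; last by rewrite hQc.
case: (eqVneq j k) => [->|hjk]; first by rewrite hQk.
by rewrite -hQsa ctrE hQc // conjC0.
Qed.

Lemma tr_delta {R : realType} {n} (k : 'I_n) (N : 'M[complex R]_n) :
  \tr (delta_mx k k *m N) = N k k.
Proof.
rewrite /mxtrace (bigD1 k) //= big1 ?addr0.
  rewrite mxE (bigD1 k) //= big1 ?addr0; first by rewrite mxE !eqxx mul1r.
  by move=> l hl; rewrite mxE (negbTE hl) andbF mul0r.
move=> i hi; rewrite mxE big1 // => l _; rewrite mxE (negbTE hi) /= mul0r //.
Qed.

Lemma spec_val {R : realType} {n} {e U : 'M[complex R]_n} (k : 'I_n) P rho :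
  ctr U *m U = 1%:M -> U *m ctr U = 1%:M -> e *m U = U *m Dn R n ->
  eig_proj e (k.+1)%:R P -> \tr (P *m rho) = (ctr U *m rho *m U) k k.
Proof.
move=> h1 h2 h3 hP.
have hQ := eigproj_form k P h1 h2 h3 hP.
have -> : P = U *m delta_mx k k *m ctr U.
  by rewrite -hQ !mulmxA h2 mul1mx -mulmxA h2 mulmx1.
by rewrite -!mulmxA mxtrace_mulC -!mulmxA (mulmxA (ctr U)) tr_delta.
Qed.

Lemma rank1_diag {R : realType} {n} (M : 'M[complex R]_n) c (w : 'cV_n) :
  M = c *: (w *m ctr w) -> (forall i j, i != j -> M i j = 0) -> \tr M = 1 ->
  exists k, M = delta_mx k k.
Proof.
move=> hMd hdiag htr.
have hM : forall i j, M i j = c * (w i 0 * (w j 0)^*).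
  by move=> i j; rewrite hMd !mxE big_ord1 ctrE.
have [k hk] : exists k, M k k != 0.
  case: (pickP (fun k => M k k != 0)) => [k hk|h]; first by exists k.
  move: htr; rewrite /mxtrace big1 => [/eqP|i _]; first by rewrite eq_sym oner_eq0.
  by move: (h i) => /negbFE /eqP.
have hc : c != 0 by move: hk; rewrite hM; apply: contraNneq => ->; rewrite mul0r.
have hwk : w k 0 != 0 by move: hk; rewrite hM; apply: contraNneq => ->; rewrite mul0r mulr0.
have hw : forall j, j != k -> w j 0 = 0.
  move=> j hjk; have := hdiag k j; rewrite eq_sym => /(_ hjk) /eqP.
  rewrite hM !mulf_eq0 (negbTE hc) (negbTE hwk) /= conjC_eq0 => /eqP //.
have hkk : M k k = 1.
  rewrite -htr /mxtrace (bigD1 k) //= big1 ?addr0 // => i hi.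
  by rewrite hM hw // !mul0r mulr0.
exists k; apply/matrixP => i j; rewrite [RHS]mxE.
case: (eqVneq i k) => [->|hik]; last by rewrite hM hw // mul0r mulr0.
case: (eqVneq j k) => [->|hjk]; first by rewrite hkk.
by rewrite hM (hw j) // conjC0 !mulr0.
Qed.

Lemma ctr_rank1 {R : realType} {n} (U : 'M[complex R]_n) c (v : 'cV_n) :
  ctr U *m (c *: (v *m ctr v)) *m U = c *: ((ctr U *m v) *m ctr (ctr U *m v)).
Proof.
by rewrite ctrM ctrK -scalemxAr -scalemxAl !mulmxA.
Qed.

Lemma Complex_inj {R : realType} (a b : R) : Complex a 0 = Complex b 0 -> a = b.
Proof. by case. Qed.

Lemma pure_spec {R : realType} {n} {e U rho : 'M[complex R]_n} c (v : 'cV_n) x :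
  ctr U *m U = 1%:M -> U *m ctr U = 1%:M -> e *m U = U *m Dn R n ->
  rho *m e = e *m rho -> rho = c *: (v *m ctr v) -> \tr rho = 1 ->
  spec_rel rho e x -> exists k, x = pure R k /\ rho = U *m delta_mx k k *m ctr U.
Proof.
move=> h1 h2 h3 hc hr htr hs.
have hdiag := comm_diag h1 h2 h3 hc.
have htrN : \tr (ctr U *m rho *m U) = 1.
  by rewrite mxtrace_mulC mulmxA h2 mul1mx.
have hMd : ctr U *m rho *m U = c *: ((ctr U *m v) *m ctr (ctr U *m v)).
  by rewrite hr ctr_rank1.
have [k hk] := rank1_diag _ _ _ hMd hdiag htrN.
exists k; split.
  apply: functional_extensionality => j.
  have [P [hP hPx]] := hs j.
  move: hPx; rewrite (spec_val j P rho h1 h2 h3 hP) hk mxE andbb /pure.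
  by case: (j == k) => /Complex_inj.
by rewrite -hk !mulmxA h2 mul1mx -mulmxA h2 mulmx1.
Qed.

Lemma pure_entropy {R : realType} {n} (rho : 'M[complex R]_n) c (v : 'cV_n) s :
  rho = c *: (v *m ctr v) -> \tr rho = 1 -> vN_entropy rho s -> s = 0.
Proof.
move=> hr htr [U [d [hU [hrho hs]]]].
have h2 : U *m ctr U = 1%:M := mulmx1C hU.
have hN : ctr U *m rho *m U = cdiag d.
  by rewrite hrho !mulmxA hU mul1mx -mulmxA hU mulmx1.
have hdiag : forall i j, i != j -> (ctr U *m rho *m U) i j = 0.
  by move=> i j hij; rewrite hN /cdiag mxE (negbTE hij) mulr0n.
have htrN : \tr (ctr U *m rho *m U) = 1.
  by rewrite mxtrace_mulC mulmxA h2 mul1mx.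
have hMd : ctr U *m rho *m U = c *: ((ctr U *m v) *m ctr (ctr U *m v)).
  by rewrite hr ctr_rank1.
have [k hk] := rank1_diag _ _ _ hMd hdiag htrN.
have hd : forall i, xlogx (d i) = 0.
  move=> i; have := congr1 (fun M : 'M[complex R]_n => M i i) (etrans (esym hN) hk).
  rewrite /cdiag !mxE eqxx mulr1n andbb /xlogx.
  case: (i == k) => /Complex_inj ->; first by rewrite oner_eq0 ln1 mulr0.
  by rewrite eqxx.
have h0 : cdiag (fun i => xlogx (d i)) = 0 :> 'M[complex R]_n.
  by apply/matrixP => i j; rewrite /cdiag !mxE hd; case: (i == j).
move: hs; rewrite h0 mulmx0 mul0mx mxtrace0 oppr0.
by case.
Qed.

Lemma shannon_zero {R : realType} {m} (x : 'I_m -> R) :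
  in_Delta x -> shannon x = 0 -> exists k, x = pure R k.
Proof.
move=> [h01 hsum] hs.
have hge : forall i, 0 <= - xlogx (x i).
  move=> i; rewrite /xlogx; case: eqP => [_|hx]; first by rewrite oppr0.
  case/andP: (h01 i) => h0 h1.
  rewrite oppr_ge0 mulr_ge0_le0 // ln_le0 //.
have hz : forall i, xlogx (x i) = 0.
  move=> i; have : \sum_i - xlogx (x i) = 0 by rewrite sumrN -/(shannon x) hs.
  by move/(psumr_eq0P (fun i _ => hge i)) => /(_ i isT) /eqP; rewrite oppr_eq0 => /eqP.
have h01' : forall i, x i = 0 \/ x i = 1.
  move=> i; move: (hz i); rewrite /xlogx; case: eqP => [->|hx]; first by left.
  move/eqP; rewrite mulf_eq0 (negbTE (introN eqP hx)) /= ln_eq0.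
    by move/eqP; right.
  by rewrite lt_neqAle eq_sym (introN eqP hx); case/andP: (h01 i).
have [k hk] : exists k, x k != 0.
  case: (pickP (fun k => x k != 0)) => [k hk|h]; first by exists k.
  move: hsum; rewrite big1 => [/eqP|i _]; first by rewrite eq_sym oner_eq0.
  by move: (h i) => /negbFE /eqP.
have hk1 : x k = 1 by case: (h01' k) => // e; move: hk; rewrite e eqxx.
exists k; apply: functional_extensionality => i; rewrite /pure.
case: (eqVneq i k) => [->//|hik].
case: (h01' i) => // hi1.
move: hsum; rewrite (bigD1 k) //= (bigD1 i) //= hk1 hi1.
have : 0 <= \sum_(j | (j != k) && (j != i)) x j.
  by apply: sumr_ge0 => j _; case/andP: (h01 j).
lra.
Qed.

Definition vt (R : realType) n' (t : nat) : 'cV[complex R]_n'.+2 :=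
  \col_i (if val i == 0%N then 1 else if val i == 1%N then t%:R else 0).
Definition ct (R : realType) (t : nat) : complex R := ((1 + t * t)%N%:R)^-1.
Definition rhot (R : realType) n' t : 'M[complex R]_n'.+2 :=
  ct R t *: (vt R n' t *m ctr (vt R n' t)).

Lemma vt_norm (R : realType) n' t : (ctr (vt R n' t) *m vt R n' t) 0 0 = (1 + t * t)%N%:R.
Proof.
rewrite mxE !big_ord_recl big1 ?addr0.
  by rewrite !ctrE !mxE /= conjC1 conjC_nat mul1r natrD natrM.
by move=> i _; rewrite ctrE !mxE /= conjC0 mul0r.
Qed.

Lemma ct_pos (R : realType) t : 0 < ct R t.
Proof. by rewrite /ct invr_gt0 ltr0n addnC addn1. Qed.

Lemma rhot_tr (R : realType) n' t : \tr (rhot R n' t) = 1.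
Proof.
rewrite /rhot mxtraceZ mxtrace_mulC {1}/mxtrace big_ord1 vt_norm /ct mulVf //.
by rewrite pnatr_eq0 addnC addn1.
Qed.

Lemma rhot_density (R : realType) n' t : density (rhot R n' t).
Proof.
have hc : (ct R t)^* = ct R t by apply: geC0_conj; apply: ltW; apply: ct_pos.
split; last exact: rhot_tr.
  by rewrite /self_adjoint /rhot ctrZ ctrM ctrK hc.
move=> z.
rewrite /rhot -scalemxAr -scalemxAl mxE.
set a := (ctr z *m vt R n' t).
have -> : ctr z *m (vt R n' t *m ctr (vt R n' t)) *m z = a *m ctr a.
  by rewrite /a ctrM ctrK !mulmxA.
rewrite mxE big_ord1 ctrE.
by apply: mulr_ge0; [apply: ltW; apply: ct_pos | apply: mul_conjC_ge0].
Qed.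

Lemma rhot_inj (R : realType) n' a b : rhot R n' a = rhot R n' b -> a = b.
Proof.
move/(congr1 (fun M : 'M[complex R]_n'.+2 => M 0 0)).
rewrite /rhot !mxE !big_ord1 !ctrE !mxE /= conjC1 !mulr1.
move/invr_inj/eqP; rewrite eqr_nat => /eqP h.
have : (a * a = b * b)%N by lia.
move=> hab; apply/eqP; case: (ltngtP a b) => // hlt.
  by move: hab; have := ltn_mul hlt hlt; lia.
by move: hab; have := ltn_mul hlt hlt; lia.
Qed.

Lemma part2 (R : realType) n' m (hm : (2 <= m)%N) :
  ~ exists phi : 'M[complex R]_n'.+2 -> ('I_m -> R),
       (forall rho, density rho -> in_Delta (phi rho)) /\
       (forall rho tau, density rho -> density tau ->
          (spectral_le rho tau <-> bayes_le (phi rho) (phi tau))) /\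
       (forall rho, density rho -> vN_entropy rho (shannon (phi rho))).
Proof.
case: m hm => [|[|m']] // _.
move=> [phi [hD [hord hent]]].
have hpure : forall t : 'I_m'.+3, exists k : 'I_m'.+2, phi (rhot R n' t) = pure R k.
  move=> t; apply: shannon_zero; first exact: hD (rhot_density _ _ _).
  exact: (@pure_entropy R _ (rhot R n' t) (ct R t) (vt R n' t) _ erefl
            (rhot_tr _ _ _) (hent _ (rhot_density _ _ _))).
have [f hf] := fin_all_exists hpure.
have : ~~ injectiveb f.
  by apply/negP => /injectiveP /leq_card; rewrite !card_ord ltnn.
case/injectivePn => a [b hab hf'].
have e : phi (rhot R n' a) = phi (rhot R n' b) by rewrite !hf hf'.
have hsl : spectral_le (rhot R n' a) (rhot R n' b).
  apply/(hord _ _ (rhot_density _ _ _) (rhot_density _ _ _)).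
  by rewrite e /=; apply: bayes_refl.
case: hsl => ee [ho [ca [cb [x [y [sx [sy hb]]]]]]].
have [U [h1 h2 h3]] := obs_decomp _ _ ho.
have [k [hx hra]] := pure_spec (ct R a) (vt R n' a) x h1 h2 h3 ca erefl (rhot_tr _ _ _) sx.
have [l [hy hrb]] := pure_spec (ct R b) (vt R n' b) y h1 h2 h3 cb erefl (rhot_tr _ _ _) sy.
move: hb; rewrite hx hy /= => /bayes_pure hkl.
have hab' : (a : nat) = b by apply: (@rhot_inj R n'); rewrite hra hrb hkl.
by move: hab; rewrite (val_inj hab') eqxx.
Qed.

Lemma sumC {R : realType} n (f : 'I_n -> R) :
  \sum_i (Complex (f i) 0 : complex R) = Complex (\sum_i f i) 0.
Proof.
elim/big_rec2: _ => [//|i a b _ ->].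
apply/eqP; rewrite eq_complex /= addr0 !eqxx //.
Qed.

Lemma oppC {R : realType} (a : R) : - (Complex a 0 : complex R) = Complex (- a) 0.
Proof. by apply/eqP; rewrite eq_complex /= oppr0 !eqxx. Qed.

Lemma ctr_diag {R : realType} {n} (d : 'rV[complex R]_n) :
  (forall i, (d 0 i)^* = d 0 i) -> ctr (diag_mx d) = diag_mx d.
Proof.
move=> h; apply/matrixP => i j; rewrite ctrE !mxE.
case: (eqVneq i j) => [->|hij]; first by rewrite !mulr1n h.
by rewrite !mulr0n conjC0.
Qed.

Lemma cdiag_sa {R : realType} {n} (x : 'I_n -> R) : self_adjoint (cdiag x).
Proof. by apply: ctr_diag => i; rewrite mxE conj_realc. Qed.

Lemma cdiag_density {R : realType} {n} (x : 'I_n -> R) :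
  in_Delta x -> density (cdiag x).
Proof.
move=> [h01 hs]; split; first exact: cdiag_sa.
  move=> v; rewrite -mulmxA mxE; apply: sumr_ge0 => i _.
  rewrite /cdiag mul_diag_mx !mxE mulrCA; apply: mulr_ge0.
    by rewrite ler0c; case/andP: (h01 i).
  by rewrite mulrC mul_conjC_ge0.
by rewrite /cdiag mxtrace_diag (eq_bigr (fun i => Complex (x i) 0)) ?sumC ?hs // => i _; rewrite mxE.
Qed.

Lemma cdiag_entropy {R : realType} {n} (x : 'I_n -> R) :
  vN_entropy (cdiag x) (shannon x).
Proof.
exists 1%:M, x; split; first by rewrite /unitary ctr1 mulmx1.
split; first by rewrite ctr1 mul1mx mulmx1.
rewrite ctr1 mul1mx mulmx1 /cdiag mxtrace_diag.
rewrite (eq_bigr (fun i => Complex (xlogx (x i)) 0)) ?sumC ?oppC // => i _.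
by rewrite mxE.
Qed.

Lemma Dn_sa {R : realType} n : self_adjoint (Dn R n).
Proof. by apply: ctr_diag => i; rewrite mxE conjC_nat. Qed.

Lemma Dn_obs {R : realType} n : observable (Dn R n).
Proof.
split; first exact: Dn_sa.
move=> a; split.
  move/eigenvalueP => [r hr rn0].
  have [j hj] : exists j, r 0 j != 0.
    case: (pickP (fun j => r 0 j != 0)) => [j hj|h]; first by exists j.
    move: rn0; case/negP; apply/eqP/matrixP => i j; rewrite ord1 mxE.
    by move: (h j) => /negbFE /eqP.
  exists j; have := congr1 (fun M : 'rV[complex R]_n => M 0 j) hr.
  rewrite /Dn mul_mx_diag !mxE mulrC => /eqP; rewrite -subr_eq0 -mulrBl mulf_eq0.
  by rewrite (negbTE hj) orbF subr_eq0 => /eqP.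
move=> [k ->]; apply/eigenvalueP; exists (delta_mx 0 k).
  apply/matrixP => i j; rewrite /Dn mul_mx_diag !mxE.
  by case: (eqVneq j k) => [->|hjk]; rewrite ?andbT ?andbF ?mulr0 ?mul0r // mulrC.
apply/eqP => /matrixP /(_ 0 k); rewrite !mxE !eqxx => /eqP; by rewrite oner_eq0.
Qed.

Lemma delta_col {R : realType} {n} (k : 'I_n) (v : 'cV[complex R]_n) i :
  (delta_mx k k *m v) i 0 = (i == k)%:R * v k 0.
Proof.
rewrite mxE (bigD1 k) //= big1 ?addr0; first by rewrite mxE eqxx andbT.
by move=> l hl; rewrite mxE (negbTE hl) andbF mul0r.
Qed.

Lemma Dn_eigproj {R : realType} {n} (k : 'I_n) :
  eig_proj (Dn R n) (k.+1)%:R (delta_mx k k).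
Proof.
split; first exact: mul_delta_mx.
  by apply/matrixP => i j; rewrite ctrE !mxE conjC_nat andbC.
move=> v; split.
  move=> h; have hz := Dn_col _ _ h.
  apply/matrixP => i j; rewrite ord1 delta_col.
  by case: (eqVneq i k) => [->|hik]; rewrite mulr_natl /= ?mulr1n ?mulr0n // (hz i hik).
move=> h; apply/matrixP => i j; rewrite ord1 /Dn mul_diag_mx !mxE.
case: (eqVneq i k) => [->//|hik].
have := congr1 (fun M : 'cV[complex R]_n => M i 0) h.
by rewrite delta_col (negbTE hik) mul0r => <-; rewrite !mulr0.
Qed.

Lemma spec_diag {R : realType} {n} (x : 'I_n -> R) : spec_rel (cdiag x) (Dn R n) x.
Proof.
move=> k; exists (delta_mx k k); split; first exact: Dn_eigproj.
by rewrite tr_delta /cdiag !mxE eqxx mulr1n.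
Qed.

Lemma bayes_to_spec {R : realType} n' (x y : 'I_n'.+2 -> R) :
  bayes_le x y -> spectral_le (cdiag x) (cdiag y).
Proof.
move=> h; exists (Dn R n'.+2); split; first exact: Dn_obs.
split; first exact: diag_mxC.
split; first exact: diag_mxC.
by exists x, y; split; [exact: spec_diag | split; [exact: spec_diag|]].
Qed.

Lemma spec_to_bayes {R : realType} n' (x y : 'I_n'.+2 -> R) :
  in_Delta x -> in_Delta y -> spectral_le (cdiag x) (cdiag y) -> bayes_le x y.
Proof.
move=> hx hy [e [ho [cx [cy [x' [y' [sx [sy hb]]]]]]]].
have [U [h1 h2 h3]] := obs_decomp _ _ ho.
have key : forall (z z' : 'I_n'.+2 -> R), cdiag z *m e = e *m cdiag z ->
    spec_rel (cdiag z) e z' -> forall i k, U i k != 0 -> z i = z' k.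
  move=> z z' cz sz i k hik.
  have hd := comm_diag h1 h2 h3 cz.
  have hDU : cdiag z *m U = U *m (ctr U *m cdiag z *m U).
    by rewrite !mulmxA h2 mul1mx.
  have [P [hP hPz]] := sz k.
  rewrite (spec_val k P _ h1 h2 h3 hP) in hPz.
  have := congr1 (fun M : 'M[complex R]_n'.+2 => M i k) hDU.
  rewrite {1}/cdiag mul_diag_mx [LHS]mxE [X in _ = X]mxE (bigD1 k) //= big1 ?addr0; last first.
    by move=> l hl; rewrite hd ?mulr0.
  rewrite mxE -hPz => /eqP; rewrite mulrC -subr_eq0 -mulrBr mulf_eq0 (negbTE hik) /=.
  by rewrite subr_eq0 => /eqP /Complex_inj.
have hdet : \det U != 0.
  apply/eqP => h0; move: (congr1 determinant h1); rewrite det_mulmx h0 mulr0 det1.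
  by move/eqP; rewrite eq_sym oner_eq0.
have [s hs] : exists s : 'S_n'.+2, \prod_i U i (s i) != 0.
  apply/existsP; apply: contraR hdet => /existsPn h; apply/eqP.
  rewrite /determinant big1 // => s _; move: (h s); rewrite negbK => /eqP ->.
  by rewrite mulr0.
have hUs : forall i, U i (s i) != 0.
  move=> i; apply: contra hs => /eqP h; apply/prodf_eq0; exists i => //; exact/eqP.
have ex : x = x' \o s.
  by apply: functional_extensionality => i; exact: key x x' cx sx i (s i) (hUs i).
have ey : y = y' \o s.
  by apply: functional_extensionality => i; exact: key y y' cy sy i (s i) (hUs i).
have hx' : in_Delta x'.
  have -> : x' = x \o (s^-1)%g.
    by apply: functional_extensionality => k; rewrite ex /= permKV.
  exact: Delta_perm.
have hy' : in_Delta y'.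
  have -> : y' = y \o (s^-1)%g.
    by apply: functional_extensionality => k; rewrite ey /= permKV.
  exact: Delta_perm.
rewrite ex ey; exact: bayes_perm hx' hy' hb.
Qed.

Theorem mainTheorem1 (R : realType) (n : nat) (hn : (2 <= n)%N) :
  (* (i) *)
  (exists phi : ('I_n -> R) -> 'M[complex R]_n,
     (forall x, in_Delta x -> density (phi x)) /\
     (forall x y, in_Delta x -> in_Delta y ->
        (bayes_le x y <-> spectral_le (phi x) (phi y))) /\
     (forall x, in_Delta x -> vN_entropy (phi x) (shannon x)))
  /\
  (* (ii) *)
  (forall m : nat, (2 <= m)%N ->
     ~ exists phi : 'M[complex R]_n -> ('I_m -> R),
       (forall rho, density rho -> in_Delta (phi rho)) /\
       (forall rho tau, density rho -> density tau ->
          (spectral_le rho tau <-> bayes_le (phi rho) (phi tau))) /\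
       (forall rho, density rho -> vN_entropy rho (shannon (phi rho)))).
Proof.
case: n hn => [|[|n']] // _.
split.
  exists (@cdiag R n'.+2); split; first by move=> x hx; exact: cdiag_density.
  split; last by move=> x _; exact: cdiag_entropy.
  move=> x y hx hy; split; [exact: bayes_to_spec | exact: spec_to_bayes].
move=> m hm; exact: part2.
Qed.
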